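(* Let $(c_t)_{t\ge0}$ be a non-decreasing sequence of positive reals and let $x^\star\in\mathbb R^d$ be a minimizer of $f$. For every $t\ge0$ let $s(t)$ be the largest multiple of $\tau$ with $s(t)\le t$. Then the FedDecSPS iterates satisfy (pathwise) $$R_t:=\frac1n\sum_{i=1}^n\|\bar x_t-x_t^i\|^2\le\frac\tau n\sum_{i=1}^n\sum_{j=s(t)}^{t-1}\frac{\gamma_j^i}{c_j}\big[F_i(x_j^i,\xi_j^i)-F_i(x^\star,\xi_j^i)\big]+\frac{c_0\gamma_b\tau}{n}\sum_{i=1}^n\sum_{j=s(t)}^{t-1}\frac1{c_j^2}\big[F_i(x^\star,\xi_j^i)-\ell_i^\star\big].$$
   Context: For each $i\in[n]$, $\mathcal D_i$ is a probability distribution on $\Omega_i$, $F_i:\mathbb R^d\times\Omega_i\to\mathbb R$ with $F_i(\cdot,\xi)$ differentiable for $\xi\in\operatorname{supp}(\mathcal D_i)$; $f_i(x):=\mathbb E_{\xi\sim\mathcal D_i}F_i(x,\xi)$, $f:=\frac1n\sum_if_i$. $F_i^\star:=\inf_{\xi\in\operatorname{supp}(\mathcal D_i),x}F_i(x,\xi)$ and $\ell_i^\star\le F_i^\star$ are given reals. FedDecSPS with parameter $\gamma_b>0$, communication period integer $\tau\ge1$, and non-decreasing positive sequence $(c_t)_{t\ge0}$: set $c_{-1}:=c_0$, $\gamma_{-1}^i:=\gamma_b$, $x_0^i=x_0$. At each $t\ge0$, client $i$ draws $\xi_t^i\sim\mathcal D_i$, sets $g_t^i:=\nabla F_i(x_t^i,\xi_t^i)$,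 $\gamma_t^i:=\frac1{c_t}\min\{\frac{F_i(x_t^i,\xi_t^i)-\ell_i^\star}{\|g_t^i\|^2},c_{t-1}\gamma_{t-1}^i\}$ (first term $+\infty$ if $g_t^i=0$); if $t+1$ is a multiple of $\tau$, $x_{t+1}^i:=\frac1n\sum_j(x_t^j-\gamma_t^jg_t^j)$ for all $i$, else $x_{t+1}^i:=x_t^i-\gamma_t^ig_t^i$. $\bar x_t:=\frac1n\sum_ix_t^i$. *)

(* Defs.v *)
From HB Require Import structures.
From mathcomp Require Import all_boot all_order all_algebra.
From mathcomp Require Import all_classical all_reals all_analysis.
Set Implicit Arguments. Unset Strict Implicit. Unset Printing Implicit Defensive.
Import Order.TTheory GRing.Theory Num.Theory.
Import numFieldNormedType.Exports.
Local Open Scope classical_set_scope.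
Local Open Scope ring_scope.

Section FedDecSPS.
Variables (R : realType) (d n : nat).
Local Notation vec := 'rV[R]_d.

Definition sqnorm (v : vec) : R := \sum_(k < d) (v 0 k) ^+ 2.

Definition grad (f : vec -> R) (x : vec) : vec :=
  \row_(k < d) ('D_(delta_mx 0 k) f x).

Variables (Omega : 'I_n -> Type) (F : forall i : 'I_n, vec -> Omega i -> R)
  (ell : 'I_n -> R) (gamma_b : R) (tau : nat) (c : nat -> R) (x0 : vec)
  (xi : nat -> forall i : 'I_n, Omega i).

(* c_{t-1}, with the convention c_{-1} = c_0 *)
Definition cprev (t : nat) : R := if t is t'.+1 then c t' else c 0.

Definition sgrad (t : nat) (i : 'I_n) (x : vec) : vec :=
  grad (fun y => F y (xi t i)) x.

Definition stepsize (t : nat) (i : 'I_n) (x : vec) (gp : R) : R :=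
  let g := sgrad t i x in
  (c t)^-1 * (if g == 0 then cprev t * gp
              else Num.min ((F x (xi t i) - ell i) / sqnorm g) (cprev t * gp)).

(* state at time t : (x_t^i)_i together with (gamma_{t-1}^i)_i *)
Fixpoint state (t : nat) : ('I_n -> vec) * ('I_n -> R) :=
  match t with
  | 0 => (fun _ => x0, fun _ => gamma_b)
  | t'.+1 =>
      let xs := (state t').1 in
      let gs := (state t').2 in
      let gam := fun i => stepsize t' i (xs i) (gs i) in
      let y := fun i => xs i - gam i *: sgrad t' i (xs i) in
      ((if (tau %| t'.+1)%N then fun _ => (n%:R)^-1 *: \sum_(j < n) y j
        else y), gam)
  end.

Definition iter_x (t : nat) (i : 'I_n) : vec := (state t).1 i.
Definition iter_gamma (t : nat) (i : 'I_n) : R := (state t.+1).2 i.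
Definition xbar (t : nat) : vec := (n%:R)^-1 *: \sum_(i < n) iter_x t i.

End FedDecSPS.

Definition last_comm (tau t : nat) : nat := (t %/ tau * tau)%N.

Definition Fstar (R : realType) (d : nat) (Om : Type) (S : set Om)
  (Fi : 'rV[R]_d -> Om -> R) : \bar R :=
  ereal_inf [set (Fi x z)%:E | x in [set: 'rV[R]_d] & z in S].

Definition fexp (R : realType) (d : nat) (dm : measure_display)
  (Om : measurableType dm) (P : probability Om R)
  (Fi : 'rV[R]_d -> Om -> R) (x : 'rV[R]_d) : \bar R :=
  (\int[P]_z (Fi x z)%:E)%E.

Definition ftot (R : realType) (d n : nat) (dm : measure_display)
  (Om : 'I_n -> measurableType dm) (P : forall i, probability (Om i) R)
  (F : forall i : 'I_n, 'rV[R]_d -> Om i -> R) (x : 'rV[R]_d) : \bar R :=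
  ((n%:R)^-1)%:E * (\sum_(i < n) fexp (P i) (F i) x)%E.

(* Main.v *)
Require Import Defs.
From HB Require Import structures.
From mathcomp Require Import all_boot all_order all_algebra.
From mathcomp Require Import all_classical all_reals all_analysis.
From mathcomp Require Import ring lra zify.
Import Order.TTheory GRing.Theory Num.Theory.
Import numFieldNormedType.Exports.
Local Open Scope classical_set_scope.
Local Open Scope ring_scope.
Section Real.
Variable R : realType.

Lemma eqle (x y : R) : x = y -> x <= y.
Proof. by move->. Qed.

Lemma var_le (n : nat) (w : 'I_n -> R) (z : R) : (0 < n)%N ->
  \sum_(i < n) ((n%:R)^-1 * \sum_(k < n) w k - w i) ^+ 2
  <= \sum_(i < n) (z - w i) ^+ 2.
Proof.
move=> n0; set S := \sum_(k < n) w k; set m := (n%:R)^-1 * S.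
have nR : (n%:R : R) != 0 by rewrite pnatr_eq0 -lt0n.
have Sm : S = n%:R * m by rewrite /m mulrA mulfV // mul1r.
rewrite -subr_ge0 -sumrB.
have -> : \sum_(i < n) ((z - w i) ^+ 2 - (m - w i) ^+ 2)
   = \sum_(i < n) ((z - m) * (z + m) - (z - m) * 2 * w i).
  by apply: eq_bigr => i _; ring.
rewrite sumrB sumr_const card_ord -mulr_sumr -/S Sm.
have -> : (z - m) * (z + m) *+ n - (z - m) * 2 * (n%:R * m) = n%:R * (z - m) ^+ 2.
  by rewrite -mulr_natr; ring.
by apply: mulr_ge0; [apply: ler0n | apply: sqr_ge0].
Qed.

Lemma cs_nat (v : nat -> R) (s k : nat) :
  (\sum_(s <= j < s + k) v j) ^+ 2 <= k%:R * \sum_(s <= j < s + k) v j ^+ 2.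
Proof.
elim: k => [|k IH]; first by rewrite addn0 !big_geq // expr0n /= mul0r.
rewrite addnS !big_nat_recr ?leq_addr //=.
set S := \sum_(s <= j < s + k) v j; set Q := \sum_(s <= j < s + k) v j ^+ 2.
have h : 2 * S * v (s + k)%N <= Q + k%:R * v (s + k)%N ^+ 2.
  rewrite /S /Q mulr_sumr mulr_suml.
  have -> : k%:R * v (s + k)%N ^+ 2 = \sum_(s <= j < s + k) v (s + k)%N ^+ 2.
    by rewrite sumr_const_nat addKn mulr_natl.
  rewrite -big_split /=; apply: ler_sum => j _.
  have := sqr_ge0 (v j - v (s + k)%N); lra.
move: IH; rewrite -/S -/Q -natr1 => IH; lra.
Qed.

End Real.

Section Alg.
Variables (R : realType) (d n : nat) (Omega : 'I_n -> Type)
  (F : forall i : 'I_n, 'rV[R]_d -> Omega i -> R)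
  (ell : 'I_n -> R) (gamma_b : R) (tau : nat) (c : nat -> R) (x0 : 'rV[R]_d)
  (xi : nat -> forall i : 'I_n, Omega i).
Hypothesis hc : forall t, 0 < c t.
Hypothesis hF : forall t i x, ell i <= F i x (xi t i).
Hypothesis hgb : 0 < gamma_b.

Lemma sqnorm_ge0 (v : 'rV[R]_d) : 0 <= sqnorm v.
Proof. by apply: sumr_ge0 => k _; apply: sqr_ge0. Qed.

Lemma sqnorm0 : sqnorm (0 : 'rV[R]_d) = 0.
Proof. by apply: big1 => k _; rewrite mxE expr0n. Qed.

Lemma sqnorm_gt0 (v : 'rV[R]_d) : v != 0 -> 0 < sqnorm v.
Proof.
move=> v0; rewrite lt_def sqnorm_ge0 andbT; apply/negP => /eqP h.
move/eqP: v0; apply; apply/rowP => k; rewrite mxE.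
have : (v 0 k) ^+ 2 == 0.
  rewrite eq_le sqr_ge0 andbT -h /sqnorm (bigD1 k) //= lerDl.
  by apply: sumr_ge0 => l _; apply: sqr_ge0.
by rewrite sqrf_eq0 => /eqP.
Qed.

Lemma step_props j i x gp : 0 <= gp ->
  let g := stepsize F ell c xi j i x gp in
  [/\ 0 <= g, c j * g <= cprev c j * gp &
      g * sqnorm (sgrad F xi j i x) <= (F i x (xi j i) - ell i) / c j].
Proof.
move=> gp0 /=; rewrite /stepsize.
have cp0 : 0 <= cprev c j * gp by apply: mulr_ge0 => //; case: j => [|j] /=; apply: ltW.
have cj0 := hc j; have cjn : c j != 0 by rewrite gt_eqF.
have Fl : 0 <= F i x (xi j i) - ell i by rewrite subr_ge0.
case: eqP => [g0|/eqP g0].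
  rewrite g0 sqnorm0 mulr0; split.
  - by apply: mulr_ge0 => //; rewrite invr_ge0 ltW.
  - by rewrite mulrA mulfV // mul1r.
  - by apply: mulr_ge0 => //; rewrite invr_ge0 ltW.
have sq0 := sqnorm_gt0 _ g0.
set q := (F i x (xi j i) - ell i) / sqnorm (sgrad F xi j i x).
have q0 : 0 <= q by apply: divr_ge0 => //; apply: ltW.
split.
- by apply: mulr_ge0; [rewrite invr_ge0 ltW | rewrite le_min q0 cp0].
- by rewrite mulrA mulfV // mul1r ge_min lexx orbT.
- rewrite -mulrA mulrC; apply: ler_wpM2r; first by rewrite invr_ge0 ltW.
  rewrite mulrC; apply: le_trans (_ : sqnorm (sgrad F xi j i x) * q <= _).
    by apply: ler_wpM2l; [apply: ltW | rewrite ge_min lexx].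
  by rewrite /q mulrC -mulrA mulVf ?mulr1 // gt_eqF.
Qed.

Lemma gs_props j i : 0 <= (state F ell gamma_b tau c x0 xi j).2 i /\
  cprev c j * (state F ell gamma_b tau c x0 xi j).2 i <= c 0 * gamma_b.
Proof.
elim: j => [|j [IH1 IH2]] /=; first by split; [apply: ltW|].
have [h1 h2 _] := step_props j i ((state F ell gamma_b tau c x0 xi j).1 i) _ IH1.
by split => //; apply: le_trans IH2.
Qed.

Lemma iter_x_S m i : iter_x F ell gamma_b tau c x0 xi m.+1 i =
  if (tau %| m.+1)%N then
    (n%:R)^-1 *: \sum_(j < n) (iter_x F ell gamma_b tau c x0 xi m j -
       iter_gamma F ell gamma_b tau c x0 xi m j *: sgrad F xi m j (iter_x F ell gamma_b tau c x0 xi m j))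
  else iter_x F ell gamma_b tau c x0 xi m i -
       iter_gamma F ell gamma_b tau c x0 xi m i *: sgrad F xi m i (iter_x F ell gamma_b tau c x0 xi m i).
Proof. by rewrite /iter_x /iter_gamma /=; case: ifP. Qed.

Lemma iter_gamma_E m i : iter_gamma F ell gamma_b tau c x0 xi m i =
  stepsize F ell c xi m i (iter_x F ell gamma_b tau c x0 xi m i)
     ((state F ell gamma_b tau c x0 xi m).2 i).
Proof. by []. Qed.


Lemma local_form t i : (0 < tau)%N ->
  forall k, (last_comm tau t + k <= t)%N ->
  iter_x F ell gamma_b tau c x0 xi (last_comm tau t + k) i =
  iter_x F ell gamma_b tau c x0 xi (last_comm tau t) i -
  \sum_(last_comm tau t <= j < last_comm tau t + k)
     iter_gamma F ell gamma_b tau c x0 xi j i *: sgrad F xi j i (iter_x F ell gamma_b tau c x0 xi j i).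
Proof.
move=> tau0; set s := last_comm tau t; elim=> [|k IH] hk.
  by rewrite addn0 big_geq // subr0.
have hk' : (s + k <= t)%N by apply: leq_trans hk; rewrite leq_add2l.
rewrite addnS iter_x_S ifN; last first.
  rewrite -addnS dvdn_addr; last by rewrite /s /last_comm dvdn_mull.
  apply/negP => /(dvdn_leq (ltn0Sn k)) => hle.
  have := ltn_pmod t tau0; have := divn_eq t tau; rewrite -/(last_comm tau t) -/s.
  move: hk; lia.
by rewrite {1}IH // big_nat_recr ?leq_addr //= opprD addrA.
Qed.

Lemma common s i i' : (tau %| s)%N ->
  iter_x F ell gamma_b tau c x0 xi s i = iter_x F ell gamma_b tau c x0 xi s i'.
Proof. by case: s => [|s] //= h; rewrite !iter_x_S h. Qed.

End Alg.

Theorem mainTheorem13 (R : realType) (d n : nat) (dm : measure_display)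
  (Omega : 'I_n -> measurableType dm)
  (D : forall i : 'I_n, probability (Omega i) R)
  (supp : forall i : 'I_n, set (Omega i))
  (F : forall i : 'I_n, 'rV[R]_d -> Omega i -> R)
  (ell : 'I_n -> R) (gamma_b : R) (tau : nat) (c : nat -> R)
  (x0 xstar : 'rV[R]_d) (xi : nat -> forall i : 'I_n, Omega i) :
  (0 < n)%N ->
  (* supp i models the support of D_i: a measurable set of full measure *)
  (forall i, measurable (supp i) /\ D i (supp i) = 1%E) ->
  (forall i z, supp i z -> forall x, differentiable (fun y => F i y z) x) ->
  (forall i, ((ell i)%:E <= Fstar (supp i) (F i))%E) ->
  0 < gamma_b -> (0 < tau)%N ->
  (forall t, 0 < c t) -> (forall t, c t <= c t.+1) ->
  (* x* is a minimizer of f *)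
  (forall y, (ftot D F xstar <= ftot D F y)%E) ->
  (* the samples xi_t^i are drawn from D_i, hence lie in its support *)
  (forall t i, supp i (xi t i)) ->
  forall t : nat,
    (n%:R)^-1 * \sum_(i < n)
        sqnorm (xbar F ell gamma_b tau c x0 xi t
                - iter_x F ell gamma_b tau c x0 xi t i)
    <= tau%:R / n%:R * \sum_(i < n) \sum_(last_comm tau t <= j < t)
          iter_gamma F ell gamma_b tau c x0 xi j i / c j
          * (F i (iter_x F ell gamma_b tau c x0 xi j i) (xi j i)
             - F i xstar (xi j i))
     + c 0 * gamma_b * tau%:R / n%:R * \sum_(i < n)
         \sum_(last_comm tau t <= j < t)
          (c j ^+ 2)^-1 * (F i xstar (xi j i) - ell i).
Proof.
move=> n0 _ _ hell hgb tau0 hc _ _ hxi t.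
have hF : forall t' i x, ell i <= F i x (xi t' i).
  move=> t' i x; rewrite -lee_fin; apply: le_trans (hell i) _.
  by apply: ereal_inf_lbound; exists x => //; exists (xi t' i).
set s := last_comm tau t.
have hts : (s <= t < s + tau)%N.
  have := ltn_pmod t tau0; have := divn_eq t tau; rewrite /s /last_comm; lia.
set m := (t - s)%N.
have ht : t = (s + m)%N by rewrite /m; lia.
have hmt : (m <= tau)%N by rewrite /m; lia.
have hloc : forall i, iter_x F ell gamma_b tau c x0 xi (s + m) i =
  iter_x F ell gamma_b tau c x0 xi s i -
  \sum_(s <= j < s + m)
     iter_gamma F ell gamma_b tau c x0 xi j i *: sgrad F xi j i (iter_x F ell gamma_b tau c x0 xi j i).
  by move=> i; apply: local_form => //; rewrite -ht.
pose i0 : 'I_n := Ordinal n0.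
have hcom : forall i, iter_x F ell gamma_b tau c x0 xi s i = iter_x F ell gamma_b tau c x0 xi s i0.
  by move=> i; apply: common; rewrite /s /last_comm dvdn_mull.
clearbody m s; subst t.
set K := c 0 * gamma_b.
pose A i := \sum_(s <= j < s + m)
     iter_gamma F ell gamma_b tau c x0 xi j i *: sgrad F xi j i (iter_x F ell gamma_b tau c x0 xi j i).
pose T1 j i := iter_gamma F ell gamma_b tau c x0 xi j i / c j
          * (F i (iter_x F ell gamma_b tau c x0 xi j i) (xi j i) - F i xstar (xi j i)).
pose T2 j i := (c j ^+ 2)^-1 * (F i xstar (xi j i) - ell i).
have step1 : \sum_(i < n) sqnorm (xbar F ell gamma_b tau c x0 xi (s + m)
                - iter_x F ell gamma_b tau c x0 xi (s + m) i)
   <= \sum_(i < n) sqnorm (A i).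
  rewrite /sqnorm exchange_big [X in _ <= X]exchange_big /=.
  apply: ler_sum => k _.
  apply: le_trans (le_trans _ (var_le _ _ (fun i => iter_x F ell gamma_b tau c x0 xi (s + m) i 0 k)
                     (iter_x F ell gamma_b tau c x0 xi s i0 0 k) n0)) _.
    apply: eqle; apply: eq_bigr => i _; rewrite /xbar !mxE summxE //.
  apply: eqle; apply: eq_bigr => i _; rewrite hloc hcom -/(A i) !mxE; ring.
have step2 : forall i, sqnorm (A i) <= tau%:R * \sum_(s <= j < s + m) (T1 j i + K * T2 j i).
  move=> i.
  have e1 : sqnorm (A i) <= m%:R * \sum_(s <= j < s + m)
      iter_gamma F ell gamma_b tau c x0 xi j i ^+ 2 *
      sqnorm (sgrad F xi j i (iter_x F ell gamma_b tau c x0 xi j i)).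
    rewrite /sqnorm /A.
    under eq_bigr => k _ do rewrite summxE.
    apply: le_trans (_ : \sum_(k < d) m%:R * \sum_(s <= j < s + m)
        (iter_gamma F ell gamma_b tau c x0 xi j i *: sgrad F xi j i (iter_x F ell gamma_b tau c x0 xi j i)) 0 k ^+ 2 <= _).
      by apply: ler_sum => k _; apply: cs_nat.
    rewrite -mulr_sumr exchange_big /=; apply: eqle; congr (_ * _).
    apply: eq_bigr => j _; rewrite mulr_sumr; apply: eq_bigr => k _.
    by rewrite mxE exprMn.
  apply: le_trans e1 _; apply: ler_pM.
  - by apply: ler0n.
  - apply: sumr_ge0 => j _; apply: mulr_ge0; [apply: sqr_ge0 | apply: sqnorm_ge0].
  - by rewrite ler_nat.
  apply: ler_sum => j _.
  have [gp0 gpK] := gs_props _ _ _ _ F ell gamma_b tau c x0 xi hc hF hgb j i.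
  have [g0 h2 h3] := step_props _ _ _ _ F ell c xi hc hF j i (iter_x F ell gamma_b tau c x0 xi j i) _ gp0.
  rewrite -iter_gamma_E in g0 h2 h3.
  rewrite /T1 /T2.
  set g := iter_gamma F ell gamma_b tau c x0 xi j i in g0 h2 h3 *.
  set q := sqnorm _ in h3 *.
  set Fx := F i (iter_x F ell gamma_b tau c x0 xi j i) (xi j i) in h3 *.
  have cj0 := hc j; have cjn : c j != 0 by rewrite gt_eqF.
  set u := (c j)^-1 in h3 *.
  have u0 : 0 < u by rewrite invr_gt0.
  have hcu : c j * u = 1 by rewrite mulfV.
  have hgK : g <= K * u.
    have -> : g = (c j * g) * u by rewrite mulrC mulrA (mulrC u) hcu mul1r.
    by apply: ler_wpM2r; [apply: ltW | apply: le_trans gpK].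
  have D0 : 0 <= F i xstar (xi j i) - ell i by rewrite subr_ge0.
  have hq : g ^+ 2 * q <= g * ((Fx - ell i) * u).
    by rewrite expr2 -mulrA; apply: ler_wpM2l.
  have hh : 0 <= (K * u - g) * (u * (F i xstar (xi j i) - ell i)).
    by apply: mulr_ge0; [rewrite subr_ge0 | apply: mulr_ge0 => //; apply: ltW].
  rewrite -exprVn -/u.
  nra.
have L : \sum_(i < n) sqnorm (xbar F ell gamma_b tau c x0 xi (s + m)
                - iter_x F ell gamma_b tau c x0 xi (s + m) i)
   <= tau%:R * (\sum_(i < n) \sum_(s <= j < s + m) T1 j i
                + K * \sum_(i < n) \sum_(s <= j < s + m) T2 j i).
  apply: le_trans step1 _; apply: le_trans (ler_sum _ (fun i _ => step2 i)) _.
  rewrite -mulr_sumr; apply: eqle; congr (_ * _).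
  rewrite mulr_sumr -big_split /=; apply: eq_bigr => i _.
  by rewrite mulr_sumr -big_split.
apply: le_trans (ler_wpM2l _ L) _; first by rewrite invr_ge0 ler0n.
apply: eqle; rewrite /K; ring.
Qed.
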